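(* Let $p$ be a prime and let $G$ be a non-abelian finite $p$-group of order $p^n$, with $d=d(G)$, $\delta=d(G/Z(G))$, $k'=d(\gamma_2G/\gamma_3G)$ and $|\gamma_2G|=p^k$. Let $r,t$ be non-negative integers with $\binom{\delta}{2}-k'=\binom{r}{2}+t$ and $0\le t<r$. Then \[\tfrac{1}{2}(d-1)(n+k)-k(d-\delta)-\binom{\delta}{3}+\binom{r}{3}+\binom{t}{2}\;\le\;\tfrac{1}{2}(d-1)(n+k)-\sum_{i=2}^{\min(d,k'+1)}(d-i).\]
   Context: $d(\cdot)$ denotes the minimal number of generators, $Z(G)$ the center, $\gamma_iG$ the lower central series. Binomial coefficients satisfy $\binom{a}{b}=0$ when $0\le a<b$; an empty sum is $0$. (The right-hand side is the exponent in a known bound $|M(G)|\le p^{\frac12(d-1)(n+k)-\sum_{i=2}^{\min(d,k'+1)}(d-i)}$ for the Schur multiplier; the left-hand side is the exponent of the bound $|M(G)|\le p^{\frac{1}{2}(d-1)(n+k)-k(d-\delta)-\binom{\delta}{3}+\binom{r}{3}+\binom{t}{2}}$.) *)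

(* Defs.v *)
From mathcomp Require Import all_boot all_order all_algebra all_fingroup all_solvable.
Set Implicit Arguments. Unset Strict Implicit. Unset Printing Implicit Defensive.

(* d(G): the minimal number of generators of G, i.e. the least #|X| with
   <<X>> = G.  The minimum is over a nonempty family since <<G>> = G. *)
Definition ngen (gT : finGroupType) (G : {set gT}) : nat :=
  \big[minn/#|G|]_(X : {set gT} | (<<X>>%g == G)) #|X|.

(* Main.v *)
Require Import Defs.
From mathcomp Require Import all_boot all_order all_algebra all_fingroup all_solvable.
From mathcomp Require Import zify.
Set Implicit Arguments. Unset Strict Implicit.

Lemma bigmin_le (I : eqType) (s : seq I) (P : pred I) (F : I -> nat) i0 X :
  X \in s -> P X -> \big[minn/i0]_(x <- s | P x) F x <= F X.
Proof.
elim: s => //= y s IH; rewrite in_cons big_cons; case/orP => [/eqP <-|hs] hP.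
  by rewrite hP geq_minl.
case: (P y); last exact: IH.
by apply: leq_trans (geq_minr _ _) _; exact: IH.
Qed.

Lemma ngen_le (gT : finGroupType) (G : {set gT}) (X : {set gT}) : <<X>>%g = G -> ngen G <= #|X|.
Proof.
move=> hX; rewrite /ngen; apply: bigmin_le; first exact: mem_index_enum.
by apply/eqP.
Qed.

Section G.
Variable gT : finGroupType.
Implicit Types (G K : {group gT}).

Lemma ngen_pgroup p K : prime p -> pgroup p K ->
  exists X : {set gT}, <<X>>%g = K /\ #|X| <= logn p #|K|.
Proof.
move=> pp.
elim: {K}_.+1 {-2}K (ltnSn #|K|) => // m IH K hK pK.
case: (eqVneq K 1%G) => [->|ntK].
  by exists set0; rewrite gen0 cards0.
have p1 : (1%G \proper K)%g.
  rewrite proper1G; apply: contra ntK => /eqP h; apply/eqP/val_inj; exact: h.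
have [M maxM _] := @maxgroup_exists _ (fun H : {group gT} => H \proper K)%g 1%G p1.
have maxM' : maximal M K by [].
have iM := p_maximal_index pK maxM'.
have sMK : (M \proper K)%g := maxgroupp maxM.
have sMK' : (M \subset K)%g := proper_sub sMK.
have pM : pgroup p M := pgroupS (proper_sub sMK) pK.
have hM : #|M| < m by have := proper_card sMK; lia.
have [Y [hY cY]] := IH M hM pM.
have [_ [x xK xM]] := properP sMK.
exists (x |: Y); split.
  have sXK : (<<x |: Y>> \subset K)%g.
    rewrite gen_subG subUset sub1set xK /=; apply: subset_trans sMK'.
    by rewrite -hY; exact: sub_gen.
  have sMX : (M \subset <<x |: Y>>)%g by rewrite -hY genS // subsetUr.
  apply/eqP; rewrite eqEsubset sXK /=; apply/negPn/negP => nKX.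
  have prX : (<<x |: Y>> \proper K)%g by rewrite properE sXK.
  case/maxgroupP: maxM => _ /(_ (<<x |: Y>>)%G prX sMX) /= EX.
  by move: xM; rewrite -EX mem_gen // setU11.
have cK : #|K| = (p * #|M|)%N by rewrite -(Lagrange sMK') iM mulnC.
rewrite cK (card_pgroup pM) -expnS pfactorK //.
rewrite cardsU1; move: cY; rewrite (card_pgroup pM) pfactorK //; lia.
Qed.

Lemma ngen_quo_le G (H : {group gT}) (X : {set gT}) :
  (G \subset 'N(H))%g -> <<X>>%g = G -> ngen (G / H)%g <= #|X|.
Proof.
move=> nGH hX.
have sX : (X \subset 'N(H))%g by apply: subset_trans nGH; rewrite -hX sub_gen.
apply: leq_trans (@ngen_le _ _ (X / H)%g _) (leq_quotient _ _).
by rewrite -quotient_gen // hX.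
Qed.

Lemma ngen_ge (G : {set gT}) c :
  (forall X : {set gT}, <<X>>%g = G -> c <= #|X|) -> c <= #|G| -> c <= ngen G.
Proof.
move=> h hG; rewrite /ngen.
elim/big_rec: _ => // X a /eqP hX ha.
by rewrite leq_min ha h.
Qed.

End G.

Lemma sum_shift a s :
  \sum_(2 <= i < a + 2) (s + a + 1 - i) + 'C(s, 2) = 'C(s + a, 2).
Proof.
elim: a s => [|a IH] s; first by rewrite big_geq // addn0.
rewrite (_ : a.+1 + 2 = (a + 2).+1) // big_nat_recr /=; last by lia.
have := IH s.+1.
rewrite (_ : s.+1 + a + 1 = s + a.+1 + 1); last by lia.
rewrite (_ : s.+1 + a = s + a.+1); last by lia.
rewrite binS bin1 => <-.
rewrite (_ : s + a.+1 + 1 - (a + 2) = s); last by lia.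
lia.
Qed.

Lemma sum_le_full N dl :
  \sum_(2 <= i < N) (dl - i) <= 'C(dl.-1, 2).
Proof.
case: dl => [|dl].
  by rewrite big1 // => i _; rewrite sub0n.
have E := sum_shift dl 0.
rewrite add0n bin0n addn0 in E.
rewrite /= -E.
case: (leqP N (dl + 2)) => hN.
  case: (leqP N 2) => h2; first by rewrite big_geq.
  rewrite [X in _ <= X](big_cat_nat _ (n := N)) //=; last by lia.
  apply: leq_trans (leq_addr _ _).
  by apply: leq_sum => i _; rewrite addn1.
rewrite (big_cat_nat _ (n := dl + 2)) //=; try lia.
rewrite [X in _ + X](_ : _ = 0) ?addn0; last first.
  rewrite big_nat_cond big1 // => i /andP[/andP[h _] _]; lia.
by apply: leq_sum => i _; rewrite addn1.
Qed.

Lemma arith (dl r t k' : nat) :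
  'C(dl, 2) = 'C(r, 2) + t + k' -> t < r ->
  \sum_(2 <= i < k'.+2) (dl - i) + 'C(r, 3) + 'C(t, 2) <= 'C(dl, 3).
Proof.
move=> E tr.
case: (ltnP r dl) => hr.
  case: (eqVneq r dl.-1) => hr1.
    have Hk : k' = r - t.
      move: E; have -> : dl = r.+1 by lia.
      rewrite binS bin1; lia.
    have S := sum_shift (r - t) t.
    rewrite (_ : t + (r - t) + 1 = dl) in S; last by lia.
    rewrite (_ : t + (r - t) = r) in S; last by lia.
    rewrite Hk (_ : (r - t).+2 = r - t + 2); last by lia.
    move: S; have -> : dl = r.+1 by lia.
    rewrite binS; lia.
  have S := sum_le_full k'.+2 dl.
  have h1 : 'C(r.+1, 3) <= 'C(dl.-1, 3) by apply: leq_bin2l; lia.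
  have h2 : 'C(t, 2) <= 'C(r, 2) by apply: leq_bin2l; lia.
  have E3 : 'C(dl, 3) = 'C(dl.-1, 3) + 'C(dl.-1, 2).
    by case: (dl) hr => [|dl'] //= _; rewrite binS.
  move: h1; rewrite binS => h1.
  lia.
have hk : t = 0 /\ k' = 0.
  have := leq_bin2l 2 hr; lia.
case: hk => t0 k0; subst t k'.
rewrite big_geq // bin0n /= addn0 add0n.
case: (eqVneq r dl) => [-> //|hne].
have hr2 : dl < r by rewrite ltn_neqAle eq_sym hne hr.
have := leq_bin2l 2 hr2; rewrite binS bin1 => h.
have d0 : dl = 0 by lia.
subst dl.
have : r <= 1.
  case: r E {hr hne hr2 h tr} => [|[|r]] //=.
  by rewrite binS bin1 bin0n /=; lia.
move=> r1; rewrite bin_small //; lia.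
Qed.

From mathcomp Require Import ring lra.
Import GRing.Theory Num.Theory.
Local Open Scope ring_scope.

Theorem lemma3p6 (gT : finGroupType) (G : {group gT}) (p n k r t : nat) :
  prime p -> pgroup p G -> ~~ abelian G ->
  #|G| = (p ^ n)%N ->
  #|('L_2(G))%g| = (p ^ k)%N ->
  let d := ngen G in
  let delta := ngen (G / 'Z(G))%g in
  let k' := ngen ('L_2(G) / 'L_3(G))%g in
  'C(delta, 2) = ('C(r, 2) + t + k')%N ->
  (t < r)%N ->
  (1 / 2 : rat) * (d%:R - 1) * (n%:R + k%:R) - k%:R * (d%:R - delta%:R)
    - ('C(delta, 3))%:R + ('C(r, 3))%:R + ('C(t, 2))%:R
  <= (1 / 2 : rat) * (d%:R - 1) * (n%:R + k%:R)
    - \sum_(2 <= i < (minn d k'.+1).+1) (d%:R - i%:R).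
Proof.
move=> pp pG _ cG cL d delta k' E tr.
have hdd : (delta <= d)%N.
  have nZ : (G \subset 'N('Z(G)))%g by apply: normal_norm; exact: center_normal.
  apply: ngen_ge => [X hX|]; first exact: ngen_quo_le.
  apply: leq_trans (leq_quotient _ _); apply: ngen_le; exact: genGid.
have hkk : (k' <= k)%N.
  have pQ : pgroup p ('L_2(G) / 'L_3(G))%g.
    by apply: quotient_pgroup; apply: pgroupS pG; exact: lcn_sub.
  have [X [hX cX]] := @ngen_pgroup _ p ('L_2(G) / 'L_3(G))%G pp pQ.
  rewrite /k'; apply: (leq_trans (ngen_le hX)); apply: leq_trans cX _.
  have hc := @leq_quotient _ ('L_3(G))%G ('L_2(G))%g.
  rewrite cL (card_pgroup pQ) leq_exp2l ?prime_gt1 // in hc.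
have A := arith E tr.
set m := minn d k'.+1.
have hm1 : (m <= d)%N by rewrite geq_minl.
have hm2 : (m <= k'.+1)%N by rewrite geq_minr.
have S1 : (\sum_(2 <= i < m.+1) (d - i) <= k * (d - delta) + \sum_(2 <= i < k'.+2) (delta - i))%N.
  apply: (@leq_trans (\sum_(2 <= i < m.+1) ((d - delta) + (delta - i))))%N.
    by apply: leq_sum => i _; lia.
  rewrite big_split /= sum_nat_const_nat.
  apply: leq_add; first by apply: leq_mul => //; lia.
  case: (leqP m.+1 2) => h2; first by rewrite big_geq.
  rewrite [X in (_ <= X)%N](big_cat_nat _ (n := m.+1)) //=; last by lia.
  exact: leq_addr.
have Hs : \sum_(2 <= i < m.+1) (d%:R - i%:R) = ((\sum_(2 <= i < m.+1) (d - i))%N)%:R :> rat.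
  rewrite natr_sum; apply: eq_big_nat => i /andP[_ hi].
  by rewrite natrB //; lia.
rewrite Hs.
have N : (\sum_(2 <= i < m.+1) (d - i) + 'C(r, 3) + 'C(t, 2) <= k * (d - delta) + 'C(delta, 3))%N by lia.
have R : ((\sum_(2 <= i < m.+1) (d - i) + 'C(r, 3) + 'C(t, 2))%N%:R <= (k * (d - delta) + 'C(delta, 3))%N%:R :> rat) by rewrite ler_nat.
rewrite !natrD natrM natrB // in R.
lra.
Qed.
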